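(* Let $A,C$ be integers with $AC\neq0$ and let $f(X)=AX+\frac{C}{X}$. Suppose there exists a nonzero rational number $T$ such that the elliptic curve \[E_2:\ Y^2=(X-2ACT^2)(X+2ACT^2)\bigl(X-2AC(2A^2T^4+(4AC-1)T^2+2C^2)\bigr)\] has positive rank over $\mathbb{Q}$. Then the equation $f(x)f(y)=f(z)$ has infinitely many nontrivial rational solutions $(x,y,z)$.
   Context: A solution $(x,y,z)$ (with $x,y,z$ nonzero, so that $f$ is defined) of $f(x)f(y)=f(z)$ is called nontrivial if $x\neq z$, $y\neq z$ and $f(z)\neq 0$. *)

(* Defs.v *)
From HB Require Import structures.
From mathcomp Require Import all_boot all_order all_algebra.
Set Implicit Arguments. Unset Strict Implicit. Unset Printing Implicit Defensive.
Import Order.TTheory GRing.Theory Num.Theory.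
Local Open Scope ring_scope.

Definition fAC (A C : int) (x : rat) : rat := A%:~R * x + C%:~R / x.

Definition nontrivial_sol (A C : int) (t : rat * rat * rat) : Prop :=
  let: (x, y, z) := t in
  [/\ x != 0, y != 0 & z != 0] /\
  fAC A C x * fAC A C y = fAC A C z /\
  [/\ x != z, y != z & fAC A C z != 0].

(* Elliptic curve in Weierstrass form y^2 = x^3 + a x^2 + b x + c over Q.
   Points: None = point at infinity O, Some (x, y) = affine point. *)
Definition ec_point := option (rat * rat).

Definition on_curve (a b c : rat) (P : ec_point) : bool :=
  match P with
  | None => true
  | Some (x, y) => y ^+ 2 == x ^+ 3 + a * x ^+ 2 + b * x + c
  end.

Definition ec_add (a b c : rat) (P Q : ec_point) : ec_point :=
  match P, Q with
  | None, _ => Q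
  | _, None => P
  | Some (x1, y1), Some (x2, y2) =>
    if (x1 == x2) && (y1 == - y2) then None
    else
      let l := if x1 == x2 then (3 * x1 ^+ 2 + 2 * a * x1 + b) / (2 * y1)
               else (y2 - y1) / (x2 - x1) in
      let x3 := l ^+ 2 - a - x1 - x2 in
      Some (x3, - (l * (x3 - x1) + y1))
  end.

Definition ec_mul (a b c : rat) (n : nat) (P : ec_point) : ec_point :=
  iter n (ec_add a b c P) None.

(* E(Q) has positive rank iff it contains a rational point of infinite order *)
Definition positive_rank (a b c : rat) : Prop :=
  exists P : ec_point, on_curve a b c P /\ forall n : nat, (0 < n)%N -> ec_mul a b c n P != None.

(* the curve Y^2 = (X - e1)(X - e2)(X - e3), expanded *)
Definition positive_rank_roots (e1 e2 e3 : rat) : Prop :=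
  positive_rank (- (e1 + e2 + e3)) (e1 * e2 + e1 * e3 + e2 * e3) (- (e1 * e2 * e3)).

(* Main.v *)
Require Import Defs.
From HB Require Import structures.
From mathcomp Require Import all_boot all_order all_algebra.
From mathcomp Require Import ring lra.
Import Order.TTheory GRing.Theory Num.Theory.
Local Open Scope ring_scope.

Set Implicit Arguments. Unset Strict Implicit. Unset Printing Implicit Defensive.


Definition F3 (a b c x : rat) := x ^+ 3 + a * x ^+ 2 + b * x + c.
Definition dF3 (a b x : rat) := 3 * x ^+ 2 + 2 * a * x + b.
Definition ec_neg (P : ec_point) : ec_point :=
  match P with None => None | Some (x, y) => Some (x, - y) end.

Lemma line_fact a b c x1 y1 x2 y2 l :
  y1 ^+ 2 = F3 a b c x1 -> y2 ^+ 2 = F3 a b c x2 ->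
  (x1 != x2 -> l * (x2 - x1) = y2 - y1) ->
  (x1 = x2 -> y1 = y2 /\ dF3 a b x1 = 2 * l * y1) ->
  (forall x, F3 a b c x - (l * (x - x1) + y1) ^+ 2 =
     (x - x1) * (x - x2) * (x - (l ^+ 2 - a - x1 - x2))) /\
  l * (x2 - x1) + y1 = y2 /\
  b + 2 * l ^+ 2 * x1 - 2 * l * y1 - (x1 * x2 + x1 * (l ^+ 2 - a - x1 - x2) + x2 * (l ^+ 2 - a - x1 - x2)) = 0.
Proof.
move=> h1 h2 hne heq.
set x3 := l ^+ 2 - a - x1 - x2.
set al := b + 2 * l ^+ 2 * x1 - 2 * l * y1 - (x1 * x2 + x1 * x3 + x2 * x3).
have id : forall x, F3 a b c x - (l * (x - x1) + y1) ^+ 2 =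
   (x - x1) * (x - x2) * (x - x3) + al * (x - x1) + (F3 a b c x1 - y1 ^+ 2).
  by move=> x; rewrite /F3 /al /x3; ring.
have L2 : l * (x2 - x1) + y1 = y2.
  case: (eqVneq x1 x2) => [e|ne]; last by rewrite hne // addrNK.
  by have [-> _] := heq e; rewrite e subrr mulr0 add0r.
have al0 : al = 0.
  case: (eqVneq x1 x2) => [e|ne].
    have [_ hd] := heq e; move: hd; rewrite /al /x3 -e /dF3 => hd.
    apply/eqP; rewrite -subr_eq0; apply/eqP.
    have -> : b + 2 * l ^+ 2 * x1 - 2 * l * y1 -
      (x1 * x1 + x1 * (l ^+ 2 - a - x1 - x1) + x1 * (l ^+ 2 - a - x1 - x1)) - 0
      = (3 * x1 ^+ 2 + 2 * a * x1 + b) - 2 * l * y1 by ring.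
    by rewrite hd subrr.
  have H := id x2; rewrite L2 -h2 -h1 in H.
  have : al * (x2 - x1) = 0.
    have -> : al * (x2 - x1) = y2 ^+ 2 - y2 ^+ 2 - (x2 - x1) * (x2 - x2) * (x2 - x3) - (y1 ^+ 2 - y1 ^+ 2) by rewrite H; ring.
    ring.
  by move/eqP; rewrite mulf_eq0 => /orP [/eqP //|]; rewrite subr_eq0 eq_sym (negbTE ne).
split; last by split.
move=> x; by rewrite id al0 mul0r addr0 -h1 subrr addr0.
Qed.

Definition slope (a b : rat) x1 y1 x2 y2 :=
  if x1 == x2 then (3 * x1 ^+ 2 + 2 * a * x1 + b) / (2 * y1)
  else (y2 - y1) / (x2 - x1).

Lemma slope_ok a b c x1 y1 x2 y2 :
  y1 ^+ 2 = F3 a b c x1 -> y2 ^+ 2 = F3 a b c x2 ->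
  ~~ ((x1 == x2) && (y1 == - y2)) ->
  (x1 != x2 -> slope a b x1 y1 x2 y2 * (x2 - x1) = y2 - y1) /\
  (x1 = x2 -> y1 = y2 /\ dF3 a b x1 = 2 * slope a b x1 y1 x2 y2 * y1).
Proof.
move=> h1 h2 hn; rewrite /slope; split.
  move=> ne; rewrite (negbTE ne); field; by rewrite subr_eq0 eq_sym.
move=> e; rewrite e eqxx /=; rewrite e eqxx /= in hn.
have : y1 ^+ 2 == y2 ^+ 2 by rewrite h1 h2 e.
rewrite eqf_sqr (negbTE hn) orbF => /eqP y12; split=> //.
have y10 : y1 != 0.
  apply: contra hn => /eqP y0; move: y12; rewrite y0 => <-; by rewrite oppr0.
rewrite /dF3 -e; field; done.
Qed.

Lemma ec_add_aff a b c x1 y1 x2 y2 :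
  ~~ ((x1 == x2) && (y1 == - y2)) ->
  ec_add a b c (Some (x1, y1)) (Some (x2, y2)) =
  let l := slope a b x1 y1 x2 y2 in
  let x3 := l ^+ 2 - a - x1 - x2 in Some (x3, - (l * (x3 - x1) + y1)).
Proof. by move=> hn; rewrite /ec_add (negbTE hn). Qed.

Lemma add_on_curve a b c P Q : on_curve a b c P -> on_curve a b c Q ->
  on_curve a b c (ec_add a b c P Q).
Proof.
case: P => [[x1 y1]|] //; case: Q => [[x2 y2]|] // /eqP h1 /eqP h2.
have [hn|hn] := boolP ((x1 == x2) && (y1 == - y2)); first by rewrite /ec_add hn.
rewrite ec_add_aff //=.

have [s1 s2] := slope_ok h1 h2 hn.
have [L _] := line_fact h1 h2 s1 s2.
set l := slope a b x1 y1 x2 y2.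
set x3 := l ^+ 2 - a - x1 - x2.
apply/eqP; rewrite sqrrN.
have := L x3; rewrite subrr mulr0 /F3 => /eqP; rewrite subr_eq0 => /eqP <-.
done.
Qed.

Lemma negK P : ec_neg (ec_neg P) = P.
Proof. by case: P => [[x y]|] //=; rewrite opprK. Qed.

Lemma add_cancel a b c (NS : forall x, F3 a b c x = 0 -> dF3 a b x != 0) P Q :
  on_curve a b c P -> on_curve a b c Q ->
  ec_neg (ec_add a b c P (ec_neg (ec_add a b c P Q))) = Q.
Proof.
case: P => [[x1 y1]|]; last by move=> _ _; rewrite /= negK.
case: Q => [[x2 y2]|]; last by move=> _ _ /=; rewrite opprK !eqxx.
move=> /eqP h1 /eqP h2.
have [hn|hn] := boolP ((x1 == x2) && (y1 == - y2)).
  rewrite /ec_add hn /=; case/andP: hn => /eqP -> /eqP ->; by rewrite opprK.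
have [s1 s2] := slope_ok h1 h2 hn.
have [L [L2 al0]] := line_fact h1 h2 s1 s2.
move: L L2 al0.
set l := slope a b x1 y1 x2 y2.
set x3 := l ^+ 2 - a - x1 - x2 => L L2 al0.
have -> : ec_neg (ec_add a b c (Some (x1, y1)) (Some (x2, y2))) = Some (x3, l * (x3 - x1) + y1).
  by rewrite ec_add_aff //= opprK.
have [hm|hm] := boolP ((x1 == x3) && (y1 == - (l * (x3 - x1) + y1))).
  exfalso; case/andP: hm => /eqP e13 /eqP ey.
  have y0 : y1 = 0.
    move: ey; rewrite -e13 subrr mulr0 add0r => /eqP; rewrite -subr_eq0 opprK -mulr2n mulrn_eq0 /= => /eqP //.
  have F0 : F3 a b c x1 = 0 by rewrite /F3 -h1 y0 expr0n.
  have := NS x1 F0; rewrite /dF3.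
  have -> : 3 * x1 ^+ 2 + 2 * a * x1 + b = 2 * l * y1 +
     (b + 2 * l ^+ 2 * x1 - 2 * l * y1 - (x1 * x2 + x1 * x3 + x2 * x3)) +
     2 * x1 * (x1 - x3) + (x2 + x1) * (x3 - x1) by rewrite /x3; ring.
  by rewrite al0 -e13 !subrr y0 !mulr0 !addr0 eqxx.
rewrite ec_add_aff //=.
have sl : slope a b x1 y1 x3 (l * (x3 - x1) + y1) = l.
  rewrite /slope; case: (eqVneq x1 x3) => [e13|ne].
    have y10 : y1 != 0.
      apply: contra hm => /eqP y0; by rewrite e13 eqxx subrr mulr0 add0r y0 oppr0 eqxx.
    have : 3 * x1 ^+ 2 + 2 * a * x1 + b = 2 * l * y1 +
     (b + 2 * l ^+ 2 * x1 - 2 * l * y1 - (x1 * x2 + x1 * x3 + x2 * x3)) +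
     2 * x1 * (x1 - x3) + (x2 + x1) * (x3 - x1) by rewrite /x3; ring.
    rewrite al0 -e13 !subrr !mulr0 !addr0 => ->; field; done.
  field; by rewrite subr_eq0 eq_sym.
rewrite sl.
have -> : l ^+ 2 - a - x1 - x3 = x2 by rewrite /x3; ring.
by rewrite opprK L2.
Qed.

Lemma mul_on_curve a b c n P : on_curve a b c P -> on_curve a b c (ec_mul a b c n P).
Proof.
move=> hP; elim: n => [|n IH] //=; exact: add_on_curve.
Qed.

Lemma mul_distinct a b c (NS : forall x, F3 a b c x = 0 -> dF3 a b x != 0) P :
  on_curve a b c P ->
  (forall n : nat, (0 < n)%N -> ec_mul a b c n P != None) ->
  forall n m, (n < m)%N -> ec_mul a b c n P != ec_mul a b c m P.
Proof.
move=> hP inf; elim=> [|n IH] [|m] //.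
  move=> _; rewrite eq_sym; exact: inf.
rewrite ltnS => hlt; apply: contra (IH _ hlt) => /eqP e.
apply/eqP.
have c1 := mul_on_curve n hP; have c2 := mul_on_curve m hP.
rewrite -(add_cancel NS hP c1) -(add_cancel NS hP c2).
by rewrite /ec_mul /= in e *; rewrite e.
Qed.

Lemma avoid_nat (p : {poly rat}) : p != 0 -> exists n : nat, p.[n%:R] != 0.
Proof.
move=> p0.
suff /hasP [n _ hn] : has (fun n : nat => p.[n%:R] != 0) (iota 0 (size p)) by exists n.
apply/negPn/negP => /hasPn H.
set rs := map (fun n : nat => n%:R : rat) (iota 0 (size p)).
have h1 : all (root p) rs.
  apply/allP => x /mapP [n hn ->]; have := H n hn; by rewrite negbK.
have h2 : uniq rs.
  rewrite map_inj_uniq ?iota_uniq //; exact: (mulrIn (oner_neq0 rat)).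
by have := max_poly_roots p0 h1 h2; rewrite size_map size_iota ltnn.
Qed.

Lemma avoid_pts (p : {poly rat}) (P : nat -> rat * rat) : p != 0 -> injective P ->
  (forall n m, (P n).1 = (P m).1 -> (P n).2 = (P m).2 \/ (P n).2 = - (P m).2) ->
  exists n, p.[(P n).1] != 0.
Proof.
move=> p0 Pinj Ppm.
set ps := map P (iota 0 (2 * size p)).
suff /hasP [q /mapP [n _ ->] hn] : has (fun q : rat * rat => p.[q.1] != 0) ps by exists n.
apply/negPn/negP => /hasPn H.
set xs := undup (map fst ps).
have hxs : (size xs < size p)%N.
  apply: max_poly_roots p0 _ (undup_uniq _).
  apply/allP => x; rewrite mem_undup => /mapP [q hq ->]; have := H q hq; by rewrite negbK.
pose r x := (nth (0, 0) ps (find (fun q : rat * rat => q.1 == x) ps)).2.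
have sub : {subset ps <= map (fun x => (x, r x)) xs ++ map (fun x => (x, - r x)) xs}.
  move=> q hq.
  have hx : has (fun q' : rat * rat => q'.1 == q.1) ps by apply/hasP; exists q.
  have hq' := nth_find (0, 0) hx.
  have mq' : nth (0, 0) ps (find (fun q' : rat * rat => q'.1 == q.1) ps) \in ps.
    by apply: mem_nth; rewrite -has_find.
  move: hq' mq'; set q' := nth _ _ _ => /eqP e1 mq'.
  have qx : q.1 \in xs by rewrite mem_undup; apply: map_f.
  move: hq mq' e1 qx; rewrite {1}/ps => /mapP [n _ eqn] /mapP [m _ em] e1 qx.
  subst q; rewrite mem_cat; rewrite em in e1.
  have [e2|e2] := Ppm n m (esym e1).
    apply/orP; left; apply/mapP; exists (P n).1 => //.
    by rewrite /r -/q' em -e2; case: (P n).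
  apply/orP; right; apply/mapP; exists (P n).1 => //.
    by rewrite /r -/q' em -e2; case: (P n).
have := uniq_leq_size _ sub.
rewrite map_inj_uniq ?iota_uniq // => /(_ isT).
rewrite size_cat !size_map size_iota => hle.
move: hle; rewrite addnn -mul2n leq_mul2l /= => hle2.
by have := leq_ltn_trans hle2 hxs; rewrite ltnn.
Qed.


Lemma preimage (A C : int) (k w : rat) : (A%:~R : rat) != 0 -> (C%:~R : rat) != 0 ->
  k ^+ 2 - w ^+ 2 = 4 * A%:~R * C%:~R ->
  (k + w) / (2 * A%:~R) != 0 /\ fAC A C ((k + w) / (2 * A%:~R)) = k.
Proof.
move=> a0 c0 e.
have kw : k + w != 0.
  apply/eqP => kw0; move: e.
  have -> : k ^+ 2 - w ^+ 2 = (k + w) * (k - w) by ring.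
  by rewrite kw0 mul0r => /eqP; rewrite eq_sym !mulf_eq0 (negbTE a0) (negbTE c0) !orbF.
split; first by rewrite mulf_neq0 // invr_eq0 mulf_neq0.
rewrite /fAC.
have -> : (C%:~R : rat) = (k ^+ 2 - w ^+ 2) / (4 * A%:~R) by rewrite e; field.
field; rewrite kw a0 //.
Qed.

Definition ypol (D u : rat) : {poly rat} := 'X * ('X - D%:P) * ('X - (D * u ^+ 2)%:P).
Definition qpol (D u sg : rat) : {poly rat} :=
  ('X ^+ 2 - (D ^+ 2 * u ^+ 2)%:P) ^+ 2 - (4 * sg ^+ 2)%:P * ypol D u.
Definition Pbad (D u : rat) (sig : seq rat) : {poly rat} :=
  ypol D u * \prod_(sg <- sig) qpol D u sg.

Lemma ypolE D u x : (ypol D u).[x] = x * (x - D) * (x - D * u ^+ 2).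
Proof. by rewrite /ypol !hornerE. Qed.
Lemma qpolE D u sg x : (qpol D u sg).[x] =
  (x ^+ 2 - D ^+ 2 * u ^+ 2) ^+ 2 - 4 * sg ^+ 2 * (x * (x - D) * (x - D * u ^+ 2)).
Proof. by rewrite /qpol /ypol !hornerE. Qed.

Lemma Pbad_neq0 D u sig : D != 0 -> u != 0 -> Pbad D u sig != 0.
Proof.
move=> D0 u0; rewrite /Pbad mulf_neq0 //.
  by rewrite /ypol !mulf_neq0 // ?polyX_eq0 // polyXsubC_eq0.
rewrite prodf_seq_neq0; apply/allP => sg _ /=.
apply/eqP => /(congr1 (fun p => p.[0])); rewrite qpolE hornerC.
rewrite !(mul0r, sub0r, mulr0, subr0, expr0n) /=.
move/eqP; rewrite sqrrN expf_eq0 /= mulf_eq0 !expf_eq0 /= (negbTE D0) (negbTE u0).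
done.
Qed.

Lemma main_sol (A C : int) (T : rat) (s : seq (rat * rat * rat)) (X Y : rat) :
  (A%:~R : rat) != 0 -> (C%:~R : rat) != 0 -> T != 0 ->
  fAC A C T != 0 -> fAC A C T != 1 ->
  Y ^+ 2 = X * (X - 4 * A%:~R * C%:~R) * (X - 4 * A%:~R * C%:~R * fAC A C T ^+ 2) ->
  (Pbad (4 * A%:~R * C%:~R) (fAC A C T) (0 :: fAC A C T :: map (fun t => fAC A C t.2) s)).[X] != 0 ->
  exists t, nontrivial_sol A C t /\ t \notin s.
Proof.
set a : rat := A%:~R; set c : rat := C%:~R; set u := fAC A C T.
set D := 4 * a * c.
move=> a0 c0 T0 u0 u1 hcur.
rewrite /Pbad hornerM mulf_eq0 negb_or => /andP [hy].
rewrite horner_prod prodf_seq_neq0 => /allP hq.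
have D0 : D != 0 by rewrite /D !mulf_neq0.
have Y0 : Y != 0.
  apply: contra hy => /eqP Y0; by rewrite ypolE -hcur Y0 expr0n.
set s_ := (X ^+ 2 - D ^+ 2 * u ^+ 2) / (2 * Y).
set W1 := (X ^+ 2 - 2 * D * X + D ^+ 2 * u ^+ 2) / (2 * Y).
set W2 := (X ^+ 2 - 2 * D * u ^+ 2 * X + D ^+ 2 * u ^+ 2) / (2 * Y).
have hsg : forall sg, sg \in 0 :: u :: map (fun t => fAC A C t.2) s -> s_ != sg.
  move=> sg hin; have := hq sg hin; rewrite /= qpolE -hcur; apply: contra => /eqP <-.
  rewrite /s_; apply/eqP; field; done.
have e1 : s_ ^+ 2 - W1 ^+ 2 = 4 * a * c.
  have -> : s_ ^+ 2 - W1 ^+ 2 = D * (X * (X - D) * (X - D * u ^+ 2)) / Y ^+ 2.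
    rewrite /s_ /W1; field; done.
  rewrite -hcur /D; field; done.
have e2 : (s_ / u) ^+ 2 - (W2 / u) ^+ 2 = 4 * a * c.
  transitivity (D * (X * (X - D) * (X - D * u ^+ 2)) / Y ^+ 2).
    rewrite /s_ /W2; field; by rewrite Y0 u0.
  rewrite -hcur /D; field; done.
have [z0 fz] := preimage a0 c0 e1.
have [y0 fy] := preimage a0 c0 e2.
set y := (s_ / u + W2 / u) / (2 * a) in y0 fy.
set z := (s_ + W1) / (2 * a) in z0 fz.
have s0 : s_ != 0 by apply: hsg; rewrite inE eqxx.
have su : s_ != u by apply: hsg; rewrite !inE eqxx orbT.
exists (T, y, z); split.
  split; first by split.
  split.
    rewrite fy fz -/u; field; done.
  split.
  - apply: contra su => /eqP Tz; by rewrite -fz -Tz.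
  - apply/eqP => yz; move: fy; rewrite yz fz => /eqP; rewrite eq_sym -subr_eq0.
    have -> : s_ / u - s_ = s_ * (1 - u) / u by field.
    have : s_ * (1 - u) / u != 0 by apply: mulf_neq0; [apply: mulf_neq0 => //; rewrite subr_eq0 eq_sym | rewrite invr_eq0].
    by move=> h; rewrite (negbTE h).
  - by rewrite fz.
apply/negP => hin.
have : fAC A C z \in 0 :: u :: map (fun t => fAC A C t.2) s.
  by rewrite !inE; apply/orP; right; apply/orP; right; apply/mapP; exists (T, y, z).
by rewrite fz => /hsg; rewrite eqxx.
Qed.


Lemma neq0_eval (p : {poly rat}) x : p.[x] != 0 -> p != 0.
Proof. by apply: contra => /eqP ->; rewrite horner0. Qed.

Lemma avoid_list (p : {poly rat}) (l : seq rat) : p != 0 ->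
  exists n : nat, p.[n%:R] != 0 /\ n%:R \notin l.
Proof.
move=> p0.
have q0 : p * \prod_(x <- l) ('X - x%:P) != 0.
  by rewrite mulf_neq0 // monic_neq0 // monic_prod_XsubC.
have [n hn] := avoid_nat q0; exists n.
move: hn; rewrite hornerM mulf_eq0 negb_or => /andP [hp hq]; split => //; move: hq.
rewrite horner_prod prodf_seq_neq0 => /allP H.
apply/negP => hin; have := H _ hin; by rewrite /= hornerXsubC subrr eqxx.
Qed.

Lemma case_m1 (A C : int) (T : rat) (s : seq (rat * rat * rat)) :
  (A%:~R : rat) != 0 -> (C%:~R : rat) != 0 -> T != 0 -> fAC A C T = -1 ->
  exists t, nontrivial_sol A C t /\ t \notin s.
Proof.
set a : rat := A%:~R; set c : rat := C%:~R => a0 c0 T0 u1.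
pose p : {poly rat} := 'X * ('X + T%:P) * (a%:P * 'X ^+ 2 + c%:P).
have p0 : p != 0.
  rewrite !mulf_neq0 ?polyX_eq0 //.
    by apply: (@neq0_eval _ 0); rewrite !hornerE.
  by apply: (@neq0_eval _ 0); rewrite !hornerE /= !mulr0 add0r.
have [n [hn hl]] := avoid_list (map (fun t : rat * rat * rat => t.1.2) s) p0.
set m : rat := n%:R in hn hl.
move: hn; rewrite /p !(hornerCM, hornerM, hornerD, hornerN, hornerX, hornerC, horner_exp) !mulf_eq0 !negb_or => /andP [/andP [m0 mT] q0].
exists (T, m, - m); split; last first.
  apply: contra hl => hin; apply/mapP; by exists (T, m, - m).
split; first by split => //; rewrite oppr_eq0.
split.
  rewrite u1 /fAC; field; done.
split.
- by apply/eqP => e; move: mT; rewrite e subrr eqxx.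
- by apply/eqP => e; move: m0; have -> : m = 0 by lra.
- have -> : fAC A C (- m) = - (a * m ^+ 2 + c) / m by rewrite /fAC; field.
  rewrite mulf_neq0 ?oppr_eq0 ?invr_eq0 //; rewrite expr2 mulrA; exact: q0.
Qed.

Lemma case_p1 (A C : int) (T : rat) (s : seq (rat * rat * rat)) :
  (A%:~R : rat) != 0 -> (C%:~R : rat) != 0 -> T != 0 -> fAC A C T = 1 ->
  exists t, nontrivial_sol A C t /\ t \notin s.
Proof.
set a : rat := A%:~R; set c : rat := C%:~R => a0 c0 T0 u1.
pose p : {poly rat} := 'X * ((a * T)%:P * 'X - c%:P) * (a%:P * 'X ^+ 2 - c%:P) * (a%:P * 'X ^+ 2 + c%:P).
have p0 : p != 0.
  rewrite !mulf_neq0 ?polyX_eq0 //.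
  1-3: apply: (@neq0_eval _ 0); rewrite !hornerE /= ?expr0n /= ?mulr0 ?sub0r ?add0r ?oppr_eq0 //.
have [n [hn hl]] := avoid_list (map (fun t : rat * rat * rat => t.1.2) s) p0.
set m : rat := n%:R in hn hl.
move: hn; rewrite /p !(hornerCM, hornerM, hornerD, hornerN, hornerX, hornerC, horner_exp) !mulf_eq0 !negb_or => /andP [/andP [/andP [m0 mT] q1] q2].
have z0 : c / (a * m) != 0 by rewrite mulf_neq0 // invr_eq0 mulf_neq0.
exists (T, m, c / (a * m)); split; last first.
  apply: contra hl => hin; apply/mapP; by exists (T, m, c / (a * m)).
split; first by split.
have fz : fAC A C (c / (a * m)) = fAC A C m by rewrite /fAC; field; rewrite c0 a0 m0.
split.
  by rewrite fz u1 mul1r.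
split.
- apply/eqP => e; move: mT; rewrite e; apply/negP; rewrite negbK.
  apply/eqP; field; rewrite a0 m0 //.
- apply/eqP => e; move: q1; rewrite {1}e; apply/negP; rewrite negbK.
  apply/eqP; field; rewrite a0 m0 //.
- have -> : fAC A C (c / (a * m)) = (a * m ^+ 2 + c) / m by rewrite fz /fAC; field.
  rewrite mulf_neq0 ?invr_eq0 //; rewrite expr2 mulrA; exact: q2.
Qed.

Lemma sq1_neq0 (k : rat) : 1 + k ^+ 2 != 0.
Proof. by rewrite paddr_eq0 ?ler01 ?sqr_ge0 // oner_eq0. Qed.

Lemma circ_eq (a c X Y : rat) : a != 0 -> X != 0 -> Y != 0 -> X ^+ 2 + Y ^+ 2 = 1 - a * c ->
  (a * (X / a) + c / (X / a)) * (a * (Y / a) + c / (Y / a)) = a * (X * Y / a) + c / (X * Y / a).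
Proof.
move=> a0 X0 Y0 h; apply/eqP; rewrite -subr_eq0; apply/eqP.
transitivity (a * c * (X ^+ 2 + Y ^+ 2 - (1 - a * c)) / (X * Y)); first by field; rewrite ?X0 ?Y0 ?a0.
by rewrite h subrr mulr0 mul0r.
Qed.

Definition kap (l X0 Y0 : rat) :=
  ((Y0 - l * X0) / (1 + l ^+ 2)) / (1 + (X0 + l * Y0) / (1 + l ^+ 2)).

Lemma case_0 (A C : int) (T : rat) (s : seq (rat * rat * rat)) :
  (A%:~R : rat) != 0 -> (C%:~R : rat) != 0 -> T != 0 -> fAC A C T = 0 ->
  exists t, nontrivial_sol A C t /\ t \notin s.
Proof.
set a : rat := A%:~R; set c : rat := C%:~R => a0 c0 T0 u0.
set l := a * T.
have l0 : l != 0 by rewrite mulf_neq0.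
have hc : c = - l ^+ 2 / a.
  have e : a * T + c / T = 0 by move: u0; rewrite /fAC.
  have -> : c = (a * T + c / T) * T - a * T * T by field.
  rewrite e /l; field; done.
pose NX : {poly rat} := 1 - 'X ^+ 2 - (2 * l)%:P * 'X.
pose NY : {poly rat} := 2%:P * 'X + l%:P * (1 - 'X ^+ 2).
pose D : {poly rat} := 1 + 'X ^+ 2.
pose NY1 := NY - D.
pose NX1 := NX - D.
pose Nm := NX * NY - l%:P * D ^+ 2.
pose Np := NX * NY + l%:P * D ^+ 2.
have ev : forall x, [/\ NX.[x] = 1 - x ^+ 2 - 2 * l * x, NY.[x] = 2 * x + l * (1 - x ^+ 2)
   & D.[x] = 1 + x ^+ 2].
  move=> x; rewrite /NX /NY /D !(hornerCM, hornerM, hornerD, hornerN, hornerX, hornerC, horner_exp, hornerE).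
  split; ring.
have ev1 : forall x, [/\ NY1.[x] = NY.[x] - D.[x], NX1.[x] = NX.[x] - D.[x],
   Nm.[x] = NX.[x] * NY.[x] - l * D.[x] ^+ 2 & Np.[x] = NX.[x] * NY.[x] + l * D.[x] ^+ 2].
  move=> x; rewrite /NY1 /NX1 /Nm /Np !(hornerCM, hornerM, hornerD, hornerN, hornerX, hornerC, horner_exp).
  by split.
pose p := NX * NY * NY1 * NX1 * Nm * Np.
have p0 : p != 0.
  rewrite !mulf_neq0 //.
  - apply: (@neq0_eval _ 0); have [-> _ _] := ev 0.
    by rewrite expr0n /= mulr0 !subr0 oner_eq0.
  - apply: (@neq0_eval _ 0); have [_ -> _] := ev 0.
    by rewrite expr0n /= mulr0 subr0 add0r mulr1.
  - apply: (@neq0_eval _ (-1)); have [-> _ _ _] := ev1 (-1); have [_ -> ->] := ev (-1).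
    have -> : 2 * -1 + l * (1 - (-1) ^+ 2) - (1 + (-1) ^+ 2) = - 4 :> rat by ring.
    by rewrite oppr_eq0.
  - apply: (@neq0_eval _ l); have [_ -> _ _] := ev1 l; have [-> _ ->] := ev l.
    have -> : 1 - l ^+ 2 - 2 * l * l - (1 + l ^+ 2) = - 4 * l ^+ 2 by ring.
    by rewrite mulf_neq0 ?oppr_eq0 ?expf_neq0.
  - apply: (@neq0_eval _ 1); have [_ _ -> _] := ev1 1; have [-> -> ->] := ev 1.
    have -> : (1 - 1 ^+ 2 - 2 * l * 1) * (2 * 1 + l * (1 - 1 ^+ 2)) - l * (1 + 1 ^+ 2) ^+ 2
      = - 8 * l by ring.
    by rewrite mulf_neq0 ?oppr_eq0.
  - apply: (@neq0_eval _ 0); have [_ _ _ ->] := ev1 0; have [-> -> ->] := ev 0.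
    have -> : (1 - 0 ^+ 2 - 2 * l * 0) * (2 * 0 + l * (1 - 0 ^+ 2)) + l * (1 + 0 ^+ 2) ^+ 2
      = 2 * l :> rat by ring.
    by rewrite mulf_neq0.
pose L := map (fun t : rat * rat * rat => kap l (a * t.1.1) (a * t.1.2)) s.
have [n [hn hl]] := avoid_list L p0.
set k : rat := n%:R in hn hl.
move: hn; rewrite /p !hornerM !mulf_eq0 !negb_or.
move=> /andP [/andP [/andP [/andP [/andP [hX hY] hY1] hX1] hm] hp].
have [eX eY eD] := ev k; have [eY1 eX1 em ep] := ev1 k.
rewrite eY1 eX1 eD eX eY in hY1 hX1; rewrite em eD eX eY in hm; rewrite ep eD eX eY in hp.
rewrite eX in hX; rewrite eY in hY.
have d0 := sq1_neq0 k.
have l2 := sq1_neq0 l.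
set X := (1 - k ^+ 2 - 2 * l * k) / (1 + k ^+ 2).
set Y := (2 * k + l * (1 - k ^+ 2)) / (1 + k ^+ 2).
have X0 : X != 0 by rewrite mulf_neq0 ?invr_eq0.
have Y0 : Y != 0 by rewrite mulf_neq0 ?invr_eq0.
have Y1 : Y != 1.
  apply: contra hY1 => /eqP e; apply/eqP.
  have -> : 2 * k + l * (1 - k ^+ 2) = Y * (1 + k ^+ 2) by rewrite /Y; field.
  by rewrite e mul1r subrr.
have X1 : X != 1.
  apply: contra hX1 => /eqP e; apply/eqP.
  have -> : 1 - k ^+ 2 - 2 * l * k = X * (1 + k ^+ 2) by rewrite /X; field.
  by rewrite e mul1r subrr.
have XYm : X * Y - l != 0.
  apply: contra hm => /eqP e; apply/eqP.
  transitivity ((X * Y - l) * (1 + k ^+ 2) ^+ 2); first by rewrite /X /Y; field.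
  by rewrite e mul0r.
have XYp : X * Y + l != 0.
  apply: contra hp => /eqP e; apply/eqP.
  transitivity ((X * Y + l) * (1 + k ^+ 2) ^+ 2); first by rewrite /X /Y; field.
  by rewrite e mul0r.
have circ : X ^+ 2 + Y ^+ 2 = 1 - a * c.
  by rewrite hc /X /Y; field; rewrite d0 a0.
exists (X / a, Y / a, X * Y / a); split; last first.
  apply: contra hl => hin; apply/mapP; exists (X / a, Y / a, X * Y / a) => //=.
  have -> : a * (X / a) = X by field.
  have -> : a * (Y / a) = Y by field.
  rewrite /kap.
  have -> : (Y - l * X) / (1 + l ^+ 2) = 2 * k / (1 + k ^+ 2) by rewrite /X /Y; field; rewrite d0 l2.
  have -> : 1 + (X + l * Y) / (1 + l ^+ 2) = 2 / (1 + k ^+ 2) by rewrite /X /Y; field; rewrite d0 l2.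
  field; done.
split.
  by split; rewrite !mulf_neq0 ?invr_eq0.
split.
  exact: circ_eq.
split.
- apply/eqP => e.
  have : X * (1 - Y) / a = 0.
    transitivity (X / a - X * Y / a); first by field.
    by rewrite e subrr.
  by apply/eqP; rewrite !mulf_neq0 ?invr_eq0 // subr_eq0 eq_sym.
- apply/eqP => e.
  have : Y * (1 - X) / a = 0.
    transitivity (Y / a - X * Y / a); first by field.
    by rewrite e subrr.
  by apply/eqP; rewrite !mulf_neq0 ?invr_eq0 // subr_eq0 eq_sym.
- rewrite /fAC -/a -/c.
  have -> : a * (X * Y / a) + c / (X * Y / a) = (X * Y - l) * (X * Y + l) / (X * Y).
    by rewrite hc; field; rewrite X0 Y0 a0.
  apply: mulf_neq0; [exact: mulf_neq0 | rewrite invr_eq0; exact: mulf_neq0].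
Qed.


Lemma NS_roots (e1 e3 : rat) : e1 != 0 -> e3 - e1 != 0 -> e3 + e1 != 0 ->
  forall x, F3 (- (e1 + - e1 + e3)) (e1 * - e1 + e1 * e3 + - e1 * e3) (- (e1 * - e1 * e3)) x = 0 ->
  dF3 (- (e1 + - e1 + e3)) (e1 * - e1 + e1 * e3 + - e1 * e3) x != 0.
Proof.
move=> h1 h2 h3 x.
have -> : F3 (- (e1 + - e1 + e3)) (e1 * - e1 + e1 * e3 + - e1 * e3) (- (e1 * - e1 * e3)) x
  = (x - e1) * (x + e1) * (x - e3) by rewrite /F3; ring.
have -> : dF3 (- (e1 + - e1 + e3)) (e1 * - e1 + e1 * e3 + - e1 * e3) x
  = (x + e1) * (x - e3) + (x - e1) * (x - e3) + (x - e1) * (x + e1) by rewrite /dF3; ring.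
move/eqP; rewrite !mulf_eq0 subr_eq0 addr_eq0 subr_eq0 => /orP [/orP [] |] /eqP ->.
- have -> : (e1 + e1) * (e1 - e3) + (e1 - e1) * (e1 - e3) + (e1 - e1) * (e1 + e1)
    = - 2 * e1 * (e3 - e1) by ring.
  by rewrite !mulf_neq0 ?oppr_eq0.
- have -> : (- e1 + e1) * (- e1 - e3) + (- e1 - e1) * (- e1 - e3) + (- e1 - e1) * (- e1 + e1)
    = 2 * e1 * (e3 + e1) by ring.
  by rewrite !mulf_neq0.
- have -> : (e3 + e1) * (e3 - e3) + (e3 - e1) * (e3 - e3) + (e3 - e1) * (e3 + e1)
    = (e3 - e1) * (e3 + e1) by ring.
  by rewrite !mulf_neq0.
Qed.

Lemma main_case (A C : int) (T e1 e3 : rat) (s : seq (rat * rat * rat)) :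
  (A%:~R : rat) != 0 -> (C%:~R : rat) != 0 -> T != 0 ->
  fAC A C T != 0 -> fAC A C T != 1 -> fAC A C T != -1 ->
  e1 = 2 * A%:~R * C%:~R * T ^+ 2 ->
  e3 = 2 * A%:~R * C%:~R *
              (2 * A%:~R ^+ 2 * T ^+ 4 + (4 * A%:~R * C%:~R - 1) * T ^+ 2
               + 2 * C%:~R ^+ 2) ->
  positive_rank_roots e1 (- e1) e3 ->
  exists t, nontrivial_sol A C t /\ t \notin s.
Proof.
set a : rat := A%:~R; set c : rat := C%:~R; set u := fAC A C T.
move=> a0 c0 T0 u0 u1 um1 he1 he3.
rewrite /positive_rank_roots; case=> P0 [hP inf].
set ca := - (e1 + - e1 + e3); set cb := e1 * - e1 + e1 * e3 + - e1 * e3;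
  set cc := - (e1 * - e1 * e3).
have ue : u = a * T + c / T by [].
have E1 : e1 != 0 by rewrite he1 !mulf_neq0 // expf_neq0.
have E2 : e3 - e1 = 4 * a * c * T ^+ 2 * ((u - 1) * (u + 1)).
  by rewrite he3 he1 ue; field.
have E3 : e3 + e1 = 4 * a * c * T ^+ 2 * u ^+ 2.
  by rewrite he3 he1 ue; field.
have E2' : e3 - e1 != 0.
  by rewrite E2 !mulf_neq0 ?expf_neq0 // ?subr_eq0 // addr_eq0.
have E3' : e3 + e1 != 0 by rewrite E3 !mulf_neq0 ?expf_neq0.
have NS := NS_roots E1 E2' E3'.
have someQ : forall n, ec_mul ca cb cc n.+1 P0 = Some (odflt (0, 0) (ec_mul ca cb cc n.+1 P0)).
  move=> n; have := inf n.+1 isT; by case: (ec_mul _ _ _ _ _).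
pose Q n := odflt (0, 0) (ec_mul ca cb cc n.+1 P0).
have hQ : forall n, (Q n).2 ^+ 2 = ((Q n).1 - e1) * ((Q n).1 + e1) * ((Q n).1 - e3).
  move=> n; have := mul_on_curve n.+1 hP; rewrite someQ -/(Q n).
  case: (Q n) => x y /= /eqP ->; rewrite /ca /cb /cc; ring.
have someQ' : forall n, ec_mul ca cb cc n.+1 P0 = Some (Q n) by move=> n; rewrite someQ.
clearbody Q.
set D := 4 * a * c.
pose P' n := (((Q n).1 + e1) / T ^+ 2, (Q n).2 / T ^+ 3).
have hcur : forall n, (P' n).2 ^+ 2 = (P' n).1 * ((P' n).1 - D) * ((P' n).1 - D * u ^+ 2).
  move=> n; rewrite /P' /= expr_div_n hQ.
  have -> : D * u ^+ 2 = (e3 + e1) / T ^+ 2 by rewrite E3 /D; field.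
  have -> : D = 2 * e1 / T ^+ 2 by rewrite he1 /D; field.
  field; done.
have Pinj : injective P'.
  move=> n m e.
  have eQ : Q n = Q m.
      move: e; rewrite /P' => -[ex ey].
    have T2 : T ^+ 2 != 0 by rewrite expf_neq0.
    have T3 : T ^+ 3 != 0 by rewrite expf_neq0.
    move/(congr1 (fun v => v * T ^+ 2 - e1)): ex; rewrite !mulfVK // !addrK => ex.
    move/(congr1 (fun v => v * T ^+ 3)): ey; rewrite !mulfVK // => ey.
    by rewrite [Q n]surjective_pairing [Q m]surjective_pairing ex ey.
  have eM : ec_mul ca cb cc n.+1 P0 = ec_mul ca cb cc m.+1 P0 by rewrite !someQ' eQ.
  case: (ltngtP n m) => // hnm.
    by have := mul_distinct NS hP inf (hnm : (n.+1 < m.+1)%N); rewrite eM eqxx.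
  by have := mul_distinct NS hP inf (hnm : (m.+1 < n.+1)%N); rewrite eM eqxx.
have Ppm : forall n m, (P' n).1 = (P' m).1 -> (P' n).2 = (P' m).2 \/ (P' n).2 = - (P' m).2.
  move=> n m e; have : (P' n).2 ^+ 2 == (P' m).2 ^+ 2 by rewrite !hcur e.
  by rewrite eqf_sqr => /orP [] /eqP; [left | right].
have D0 : D != 0 by rewrite /D !mulf_neq0.
have [n hn] := avoid_pts (Pbad_neq0 (0 :: u :: map (fun t => fAC A C t.2) s) D0 u0) Pinj Ppm.
exact: (main_sol a0 c0 T0 u0 u1 (hcur n) hn).
Qed.

Unset Implicit Arguments.

Theorem theorem1p2 (A C : int) (hAC : A * C != 0) (T : rat) (hT : T != 0)
  (hE2 : positive_rank_roots
           (2 * A%:~R * C%:~R * T ^+ 2)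
           (- (2 * A%:~R * C%:~R * T ^+ 2))
           (2 * A%:~R * C%:~R *
              (2 * A%:~R ^+ 2 * T ^+ 4 + (4 * A%:~R * C%:~R - 1) * T ^+ 2
               + 2 * C%:~R ^+ 2))) :
  forall s : seq (rat * rat * rat),
    exists t : rat * rat * rat, nontrivial_sol A C t /\ t \notin s.
Proof.
move=> s.
have a0 : (A%:~R : rat) != 0.
  by rewrite intr_eq0; apply: contra hAC => /eqP ->; rewrite mul0r.
have c0 : (C%:~R : rat) != 0.
  by rewrite intr_eq0; apply: contra hAC => /eqP ->; rewrite mulr0.
have [u0|u0] := eqVneq (fAC A C T) 0; first exact: (case_0 s a0 c0 hT u0).
have [u1|u1] := eqVneq (fAC A C T) 1; first exact: (case_p1 s a0 c0 hT u1).
have [um1|um1] := eqVneq (fAC A C T) (-1); first exact: (case_m1 s a0 c0 hT um1).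
exact: (main_case s a0 c0 hT u0 u1 um1 erefl erefl hE2).
Qed.
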